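(* Let $I$ be a non-empty upward directed set with no maximal element. For $\alpha\in I$ let $E_\alpha$ be the set of tuples $(\alpha_1,\alpha_2,\dots,\alpha_{2n-1},\alpha_{2n})$ ($n\ge1$) of elements of $I$ such that (i) $\alpha_{2n-1}=\alpha$; (ii) $\alpha_{2i-1}\le\alpha_{2i}$ for all $1\le i\le n$; (iii) $\alpha_{2i-1}\not\le\alpha_{2j-1}$ for all $1\le j<i\le n$. For $\alpha\le\beta$ and $(\beta_1,\dots,\beta_{2m})\in E_\beta$, let $j$ be the smallest index with $\alpha\le\beta_{2j-1}$ and set $\epsilon_{\alpha\beta}(\beta_1,\dots,\beta_{2m})=(\beta_1,\dots,\beta_{2j-2},\alpha,\beta_{2j})$. Then each $E_\alpha$ is non-empty, $\epsilon_{\alpha\beta}$ is a well-defined map $E_\beta\to E_\alpha$, $\{E_\alpha,\epsilon_{\alpha\beta}\}$ is an $I$-inverse system, and every $\epsilon_{\alpha\beta}$ is surjective.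
   Context: An $I$-inverse system consists of sets $E_\alpha$ ($\alpha\in I$) and maps $\epsilon_{\alpha\beta}:E_\beta\to E_\alpha$ for $\alpha\le\beta$ with $\epsilon_{\alpha\alpha}=\mathrm{id}$ and $\epsilon_{\alpha\beta}\epsilon_{\beta\gamma}=\epsilon_{\alpha\gamma}$. *)

(* Defs.v *)
From mathcomp Require Import all_boot.
Set Implicit Arguments. Unset Strict Implicit. Unset Printing Implicit Defensive.

(* A tuple (a_1, a_2, ..., a_{2n-1}, a_{2n}) of elements of I (n >= 1) is
   encoded as the nonempty list of pairs [:: (a_1,a_2); ...; (a_{2n-1},a_{2n})].
   The order on I is a boolean relation [le]. *)

Section Sys.
Variable I : Type.
Variable le : rel I.

(* Membership in E_alpha. Index k (0-based) of the list corresponds to the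
   pair (a_{2k+1}, a_{2k+2}). *)
Definition E_set (alpha : I) (s : seq (I * I)) : Prop :=
  [/\ s <> [::],
      (last (alpha, alpha) s).1 = alpha,
      (forall k, k < size s -> le (nth (alpha, alpha) s k).1 (nth (alpha, alpha) s k).2)
    & (forall j i, j < i -> i < size s ->
          ~~ le (nth (alpha, alpha) s i).1 (nth (alpha, alpha) s j).1)].

(* epsilon_{alpha beta}: with j the first (0-based) index such that
   alpha <= beta_{2j+1}, keep the pairs before j and replace pair j by
   (alpha, beta_{2j+2}), dropping the rest.  The formula does not depend
   on beta except through the domain E_beta. *)
Definition eps (alpha beta : I) (s : seq (I * I)) : seq (I * I) :=
  let j := find (fun p => le alpha p.1) s in
  rcons (take j s) (alpha, (nth (alpha, alpha) s j).2).

End Sys.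

Definition directed (I : Type) (le : rel I) : Prop :=
  forall x y : I, exists z, le x z /\ le y z.

(* x is maximal iff x <= y implies y <= x (preorder notion; for a partial
   order this is the usual one). *)
Definition no_maximal (I : Type) (le : rel I) : Prop :=
  forall x : I, exists y, le x y /\ ~~ le y x.

(* Main.v *)
Require Import Defs.
From mathcomp Require Import all_boot.
Set Implicit Arguments. Unset Strict Implicit.

Lemma ED (I : Type) (le : rel I) a s : E_set le a s -> forall d,
  (forall k, k < size s -> le (nth d s k).1 (nth d s k).2) /\
  (forall j i, j < i -> i < size s -> ~~ le (nth d s i).1 (nth d s j).1).
Proof.
case=> _ _ P Q d; split.
  by move=> k hk; rewrite (set_nth_default (a,a)) //; apply: P.
move=> j i ji hi; rewrite (set_nth_default (a,a)) // (set_nth_default (a,a) d (ltn_trans ji hi)).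
by apply: Q.
Qed.

Lemma EI (I : Type) (le : rel I) a s d : s <> [::] -> (last d s).1 = a ->
  (forall k, k < size s -> le (nth d s k).1 (nth d s k).2) ->
  (forall j i, j < i -> i < size s -> ~~ le (nth d s i).1 (nth d s j).1) ->
  E_set le a s.
Proof.
move=> nz hl P Q; split => //.
- by case: s nz hl P Q => // x s' _ /=.
- by move=> k hk; rewrite (set_nth_default d) //; apply: P.
move=> j i ji hi; rewrite (set_nth_default d) // (set_nth_default d (a,a) (ltn_trans ji hi)).
by apply: Q.
Qed.

Lemma find_eq (T : Type) (a : pred T) (s : seq T) j d :
  j < size s -> a (nth d s j) -> (forall k, k < j -> ~~ a (nth d s k)) ->
  find a s = j.
Proof.
elim: s j => [|x s IH] [|j] //= hj haj hb.
- by rewrite haj.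
- have := hb 0 erefl => /= /negbTE ->; congr S; apply: IH => // k hk.
  exact: (hb k.+1).
Qed.

Lemma hasE (I : Type) (le : rel I)
  (le_trans : forall x y z, le x y -> le y z -> le x z) alpha beta s :
  E_set le beta s -> le alpha beta -> has (fun p => le alpha p.1) s.
Proof.
case=> nz hl _ _ ab; case/lastP: s nz hl => [//|s' x] _.
by rewrite last_rcons has_rcons => ->; rewrite ab.
Qed.

Lemma part2 (I : Type) (le : rel I)
  (le_trans : forall x y z, le x y -> le y z -> le x z) alpha beta :
  le alpha beta -> forall s, E_set le beta s -> E_set le alpha (eps le alpha beta s).
Proof.
move=> ab s Es.
have hs := hasE le_trans Es ab.
have [P Q] := ED Es (alpha, alpha).
rewrite /eps.
set j := find _ s.
have hj : j < size s by rewrite -has_find.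
apply: (@EI _ _ _ _ (alpha, alpha)).
- by case: (take _ _).
- by rewrite last_rcons.
- move=> k; rewrite size_rcons size_take hj ltnS nth_rcons size_take hj.
  rewrite leq_eqVlt => /orP[/eqP->|lt].
    rewrite ltnn eqxx /=.
    apply: le_trans (P j hj).
    exact: (nth_find (alpha, alpha) hs).
  by rewrite lt nth_take //; apply: P; apply: ltn_trans lt hj.
move=> j' i lt; rewrite size_rcons size_take hj ltnS leq_eqVlt => /orP[/eqP hi|hi].
  subst i; rewrite !nth_rcons size_take hj ltnn eqxx lt /= nth_take //.
  by rewrite (before_find _ lt).
rewrite !nth_rcons size_take hj hi (ltn_trans lt hi) !nth_take //.
  by apply: Q => //; apply: ltn_trans hi hj.
exact: ltn_trans lt hi.
Qed.

Lemma part3 (I : Type) (le : rel I) (le_refl : forall x, le x x) alpha s :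
  E_set le alpha s -> eps le alpha alpha s = s.
Proof.
move=> Es; have [nz hl _ _] := Es; have [P Q] := ED Es (alpha, alpha).
move: nz hl P Q; case/lastP: s {Es} => [//|s' x] _.
rewrite last_rcons => hl P Q.
rewrite /eps.
have -> : find (fun p => le alpha p.1) (rcons s' x) = size s'.
  apply: (@find_eq _ _ _ _ (alpha, alpha)).
  - by rewrite size_rcons.
  - by rewrite nth_rcons ltnn eqxx /= hl.
  move=> k hk; have := Q k (size s') hk.
  by rewrite size_rcons ltnSn nth_rcons ltnn eqxx nth_rcons hk hl; apply.
have -> : take (size s') (rcons s' x) = s' by rewrite -cats1 take_size_cat.
rewrite nth_rcons ltnn eqxx.
by case: x hl {P Q} => x1 x2 /= ->.
Qed.


Lemma part4 (I : Type) (le : rel I)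
  (le_trans : forall x y z, le x y -> le y z -> le x z) alpha beta gamma :
  le alpha beta -> le beta gamma -> forall s, E_set le gamma s ->
  eps le alpha beta (eps le beta gamma s) = eps le alpha gamma s.
Proof.
move=> ab bg s Es.
have hb := hasE le_trans Es bg.
have ha := hasE le_trans Es (le_trans _ _ _ ab bg).
rewrite /eps.
set j1 := find (fun p => le beta p.1) s.
set j0 := find (fun p => le alpha p.1) s.
have hj1 : j1 < size s by rewrite -has_find.
have j01 : j0 <= j1.
  rewrite leqNgt; apply/negP => lt.
  have := before_find (alpha, alpha) lt.
  have := nth_find (alpha, alpha) hb.
  by rewrite -/j1 => /(le_trans _ _ _ ab) ->.
set t := rcons (take j1 s) _.
have Hnt : forall k, k < j1 -> nth (alpha, alpha) t k = nth (alpha, alpha) s k.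
  by move=> k hk; rewrite /t nth_rcons size_take hj1 hk nth_take.
have -> : find (fun p => le alpha p.1) t = j0.
  apply: (@find_eq _ _ _ _ (alpha, alpha)).
  - by rewrite /t size_rcons size_take hj1 ltnS.
  - move: j01; rewrite leq_eqVlt => /orP[/eqP e|lt].
      by rewrite /t nth_rcons size_take hj1 e ltnn eqxx /=.
    by rewrite Hnt // (nth_find _ ha).
  move=> k hk; rewrite Hnt; last exact: leq_trans hk j01.
  by rewrite (before_find _ hk).
have -> : take j0 t = take j0 s.
  by rewrite /t -cats1 takel_cat ?take_takel // size_take hj1.
congr rcons; congr pair.
move: j01; rewrite leq_eqVlt => /orP[/eqP e|lt].
  rewrite /t nth_rcons size_take hj1 e ltnn eqxx /=.
  by rewrite (set_nth_default (alpha, alpha) _ hj1).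
by rewrite Hnt.
Qed.

Lemma part5 (I : Type) (le : rel I)
  (le_trans : forall x y z, le x y -> le y z -> le x z) (le_refl : forall x, le x x)
  alpha beta : le alpha beta -> forall t, E_set le alpha t ->
  exists s, E_set le beta s /\ eps le alpha beta s = t.
Proof.
move=> ab t Et; have [nz hl _ _] := Et; have [P Q] := ED Et (alpha, alpha).
move: nz hl P Q; case/lastP: t {Et} => [//|t' x] _.
rewrite last_rcons size_rcons => hl P Q.
have Ht' : forall k, k < size t' -> ~~ le alpha (nth (alpha, alpha) t' k).1.
  move=> k hk; have := Q k (size t') hk (ltnSn _).
  by rewrite nth_rcons ltnn eqxx nth_rcons hk hl.
have Pt : forall k, k < size t' -> le (nth (alpha, alpha) t' k).1 (nth (alpha, alpha) t' k).2.
  by move=> k hk; have := P k (ltnW hk); rewrite nth_rcons hk.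
have Qt : forall j i, j < i -> i < size t' -> ~~ le (nth (alpha, alpha) t' i).1 (nth (alpha, alpha) t' j).1.
  move=> j i ji hi; have := Q j i ji (ltnW hi).
  by rewrite !nth_rcons hi (ltn_trans ji hi).
have Px : le alpha x.2.
  by have := P (size t') (ltnSn _); rewrite nth_rcons ltnn eqxx hl.
have Ht : take (size t') (rcons t' x) = t' by rewrite -cats1 take_size_cat.
case: (boolP (le beta alpha)) => hba.
  exists (rcons t' (beta, x.2)); split.
    apply: (@EI _ _ _ _ (alpha, alpha)).
    - by case: (t').
    - by rewrite last_rcons.
    - move=> k; rewrite size_rcons ltnS leq_eqVlt nth_rcons => /orP[/eqP->|hk].
        by rewrite ltnn eqxx /=; apply: le_trans Px.
      by rewrite hk; apply: Pt.
    move=> j i ji; rewrite size_rcons ltnS leq_eqVlt => /orP[/eqP e|hi].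
      subst i; rewrite !nth_rcons ltnn eqxx ji /=.
      by apply/negP => /(le_trans _ _ _ ab) h; move: (Ht' j ji); rewrite h.
    by rewrite !nth_rcons hi (ltn_trans ji hi); apply: Qt.
  rewrite /eps.
  have -> : find (fun p => le alpha p.1) (rcons t' (beta, x.2)) = size t'.
    apply: (@find_eq _ _ _ _ (alpha, alpha)).
    - by rewrite size_rcons.
    - by rewrite nth_rcons ltnn eqxx.
    by move=> k hk; rewrite nth_rcons hk; apply: Ht'.
  have -> : take (size t') (rcons t' (beta, x.2)) = t' by rewrite -cats1 take_size_cat.
  rewrite nth_rcons ltnn eqxx /=.
  by case: x hl {P Q Px Ht} => x1 x2 /= ->.
exists (rcons (rcons t' x) (beta, beta)); split.
  apply: (@EI _ _ _ _ (alpha, alpha)).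
  - by rewrite -cats1; case: (t').
  - by rewrite last_rcons.
  - move=> k; rewrite !size_rcons ltnS leq_eqVlt nth_rcons size_rcons => /orP[/eqP->|hk].
      by rewrite ltnn eqxx /=.
    rewrite hk nth_rcons; move: hk; rewrite ltnS leq_eqVlt => /orP[/eqP->|hk].
      by rewrite ltnn eqxx hl.
    by rewrite hk; apply: Pt.
  move=> j i ji; rewrite !size_rcons ltnS leq_eqVlt => /orP[/eqP e|hi].
    subst i; rewrite !nth_rcons !size_rcons ltnn eqxx ji /=.
    move: ji; rewrite ltnS leq_eqVlt => /orP[/eqP->|hj].
      by rewrite ltnn eqxx hl.
    rewrite hj; apply/negP => /(le_trans _ _ _ ab) h; move: (Ht' j hj).
    by rewrite h.
  rewrite !nth_rcons size_rcons hi (ltn_trans ji hi).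
  move: hi; rewrite ltnS leq_eqVlt => /orP[/eqP e|hi].
    subst i; rewrite ltnn eqxx ji hl; exact: Ht'.
  by rewrite hi (ltn_trans ji hi); apply: Qt.
rewrite /eps.
have -> : find (fun p => le alpha p.1) (rcons (rcons t' x) (beta, beta)) = size t'.
  apply: (@find_eq _ _ _ _ (alpha, alpha)).
  - by rewrite !size_rcons ltnS.
  - by rewrite !nth_rcons size_rcons ltnS leqnn ltnn eqxx hl.
  move=> k hk; rewrite !nth_rcons size_rcons (ltn_trans hk (ltnSn _)) hk; exact: Ht'.
have -> : take (size t') (rcons (rcons t' x) (beta, beta)) = t' by rewrite -cats1 takel_cat ?size_rcons // Ht.
rewrite !nth_rcons size_rcons ltnS leqnn ltnn eqxx.
by case: x hl {P Q Px Ht} => x1 x2 /= ->.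
Qed.

Unset Implicit Arguments.
Theorem mainTheorem3 (I : Type) (le : rel I)
  (le_refl : forall x, le x x)
  (le_trans : forall x y z, le x y -> le y z -> le x z)
  (I_nonempty : inhabited I)
  (I_directed : directed le)
  (I_nomax : no_maximal le) :
  (* each E_alpha is non-empty *)
  (forall alpha, exists s, E_set le alpha s) /\
  (* epsilon_{alpha beta} maps E_beta into E_alpha *)
  (forall alpha beta, le alpha beta ->
     forall s, E_set le beta s -> E_set le alpha (eps le alpha beta s)) /\
  (* epsilon_{alpha alpha} = id on E_alpha *)
  (forall alpha s, E_set le alpha s -> eps le alpha alpha s = s) /\
  (* epsilon_{alpha beta} o epsilon_{beta gamma} = epsilon_{alpha gamma} on E_gamma *)
  (forall alpha beta gamma, le alpha beta -> le beta gamma ->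
     forall s, E_set le gamma s ->
       eps le alpha beta (eps le beta gamma s) = eps le alpha gamma s) /\
  (* every epsilon_{alpha beta} : E_beta -> E_alpha is surjective *)
  (forall alpha beta, le alpha beta ->
     forall t, E_set le alpha t ->
       exists s, E_set le beta s /\ eps le alpha beta s = t).
Proof.
split; first by move=> alpha; exists [:: (alpha, alpha)]; apply: (@EI _ _ _ _ (alpha, alpha)) => //= [[|k]|[|j] [|i]].
split; first exact: part2.
split; first exact: part3.
split; first exact: part4.
exact: part5.
Qed.
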